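(* Let $(B_\gamma,\precsim_\gamma)_{\gamma\in\Gamma}$ be a family, indexed by a totally ordered set $\Gamma$, of abelian groups each endowed with a valuational quasi-order. Then the valuational Hahn product $(G,\precsim_{val})$ of this family is again a group with a valuational quasi-order.
   Context: A quasi-order $\precsim$ on an abelian group $A$ is valuational if there is a valuation $v$ on $A$ (a map $v:A\to\Delta\cup\{\infty\}$, $\Delta$ totally ordered, $\infty$ above $\Delta$, with $v(a)=\infty\Leftrightarrow a=0$, $v(a+b)\ge\min(v(a),v(b))$, $v(-a)=v(a)$) such that $a\precsim b\Leftrightarrow v(b)\le v(a)$. The Hahn product $G$ of $(B_\gamma)_{\gamma\in\Gamma}$ is the group of all $g=(g_\gamma)_\gamma\in\prod_\gamma B_\gamma$ whose support $\{\gamma: g_\gamma\neq0\}$ is well-ordered, with $v(g)=\min\operatorname{supp}(g)$ ($v(0)=\infty$). The valuational Hahn product is $(G,\precsim_{val})$ with $g\precsim_{val}h\Leftrightarrow g_\delta\precsim_\delta h_\delta$ where $\delta=\min(v(g),v(h))$ (and $0\precsim_{val}0$). *)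

(* Defs.v *)
From HB Require Import structures.
From mathcomp Require Import all_boot all_order all_algebra.
Set Implicit Arguments. Unset Strict Implicit. Unset Printing Implicit Defensive.
Import Order.TTheory GRing.Theory.
Local Open Scope ring_scope.

(* Order on Delta ∪ {∞}, encoded as [option D] with [None] = ∞ (top). *)
Definition vle {d : Order.disp_t} {D : orderType d} (x y : option D) : Prop :=
  match y with
  | None => True
  | Some b => match x with None => False | Some a => (a <= b)%O end
  end.

Definition valuational_on {A : Type} (zero : A) (add : A -> A -> A)
    (opp : A -> A) (S : A -> Prop) (R : A -> A -> Prop) : Prop :=
  exists (d : Order.disp_t) (D : orderType d) (v : A -> option D),
    (forall a, S a -> (v a = None <-> a = zero)) /\
    (forall a b, S a -> S b -> vle (v a) (v (add a b)) \/ vle (v b) (v (add a b))) /\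
    (forall a, S a -> v (opp a) = v a) /\
    (forall a b, S a -> S b -> (R a b <-> vle (v b) (v a))).

Definition valuational {A : zmodType} (R : A -> A -> Prop) : Prop :=
  valuational_on (0 : A) +%R -%R (fun _ => True) R.

Definition subgroup_closed {A : Type} (zero : A) (add : A -> A -> A)
    (opp : A -> A) (S : A -> Prop) : Prop :=
  S zero /\ (forall a b, S a -> S b -> S (add a b)) /\ (forall a, S a -> S (opp a)).

Section Hahn.
Context {dG : Order.disp_t} {Gam : orderType dG} (B : Gam -> zmodType).

Definition hprod := forall g : Gam, B g.
Definition hzero : hprod := fun g => 0.
Definition hadd (x y : hprod) : hprod := fun g => x g + y g.
Definition hopp (x : hprod) : hprod := fun g => - x g.

Definition is_min (P : Gam -> Prop) (m : Gam) : Prop :=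
  P m /\ forall x, P x -> (m <= x)%O.

Definition well_ordered (P : Gam -> Prop) : Prop :=
  forall Q : Gam -> Prop, (forall x, Q x -> P x) -> (exists x, Q x) ->
    exists m, is_min Q m.

Definition support (x : hprod) : Gam -> Prop := fun g => x g <> 0.

Definition hahn_set (x : hprod) : Prop := well_ordered (support x).

Definition hahn_le (R : forall g, B g -> B g -> Prop) (x y : hprod) : Prop :=
  (x = hzero /\ y = hzero) \/
  exists delta, is_min (fun g => support x g \/ support y g) delta /\
                R delta (x delta) (y delta).
End Hahn.

(* Main.v *)
From Pilot Require Import Defs.
From HB Require Import structures.
From mathcomp Require Import all_boot all_order all_algebra.
From Stdlib Require Import ClassicalEpsilon FunctionalExtensionality.
Set Implicit Arguments. Unset Strict Implicit. Unset Printing Implicit Defensive.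
Import Order.TTheory GRing.Theory.

Local Open Scope order_scope.
Section Lex.
Context {dG : Order.disp_t} (Gam : orderType dG) (dD : Gam -> Order.disp_t)
  (D : forall g, orderType (dD g)).
Definition lexT := {g : Gam & D g}.
HB.instance Definition _ := Choice.on lexT.
Definition lexle (u v : lexT) : bool :=
  (tag u < tag v) || ((tag u == tag v) && (tagged u <= tagged_as u v)).
Lemma lexle_refl : reflexive lexle.
Proof. by case=> g a; rewrite /lexle /= eqxx tagged_asE lexx orbT. Qed.
Lemma lexle_anti : antisymmetric lexle.
Proof.
case=> g a [h b]; rewrite /lexle /=.
case: (ltgtP g h) => //= eq.
subst h; rewrite !tagged_asE => /andP[ab ba].
by rewrite (@le_anti _ _ a b); rewrite ?ab ?ba.
Qed.
Lemma lexle_trans : transitive lexle.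
Proof.
case=> g a [h b] [k c]; rewrite /lexle /=.
move=> /orP[ltgh|/andP[/eqP egh]].
  move=> /orP[lthk|/andP[/eqP ehk _]]; first by rewrite (lt_trans ltgh lthk).
  by subst k; rewrite ltgh.
subst h; rewrite tagged_asE => ab /orP[lthk|/andP[/eqP ehk]]; first by rewrite lthk.
subst k; rewrite !tagged_asE eqxx => bc; rewrite (le_trans ab bc) orbT //.
Qed.
Lemma lexle_total : total lexle.
Proof.
case=> g a [h b]; rewrite /lexle /=.
case: (ltgtP g h) => //= eq; subst h; rewrite !tagged_asE; exact: le_total.
Qed.
HB.instance Definition _ := Order.Le_isPOrder.Build dG lexT lexle_refl lexle_anti lexle_trans.
HB.instance Definition _ := Order.POrder_isTotal.Build dG lexT lexle_total.
Lemma lexleE (u v : lexT) : (u <= v) = lexle u v.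
Proof. by []. Qed.
End Lex.

Local Close Scope order_scope.
Local Open Scope ring_scope.

Notation hsupp := Pilot.Defs.support.
Section Gen.
Context {dG : Order.disp_t} {Gam : orderType dG} (B : Gam -> zmodType).

Lemma wo_sub (P Q : Gam -> Prop) : well_ordered P -> (forall g, Q g -> P g) ->
  well_ordered Q.
Proof. move=> HP HQ S HS ne; apply: HP ne => x /HS; exact: HQ. Qed.

Lemma wo_union (P Q : Gam -> Prop) : well_ordered P -> well_ordered Q ->
  well_ordered (fun g => P g \/ Q g).
Proof.
move=> HP HQ S HS [x0 Sx0].
have mP : (exists x, S x /\ P x) -> exists m, is_min (fun x => S x /\ P x) m.
  by move=> ne; apply: HP ne => x [].
have mQ : (exists x, S x /\ Q x) -> exists m, is_min (fun x => S x /\ Q x) m.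
  by move=> ne; apply: HQ ne => x [].
case: (classic (exists x, S x /\ P x)) => [/mP [m1 [[S1 P1] H1]]|nP];
case: (classic (exists x, S x /\ Q x)) => [/mQ [m2 [[S2 Q2] H2]]|nQ].
- case: (leP m1 m2) => [le12|lt21].
    exists m1; split=> // x Sx; case: (HS x Sx) => [Px|Qx]; first exact: H1.
    exact: le_trans le12 (H2 x (conj Sx Qx)).
  exists m2; split=> // x Sx; case: (HS x Sx) => [Px|Qx]; last exact: H2.
  exact: le_trans (ltW lt21) (H1 x (conj Sx Px)).
- exists m1; split=> // x Sx; case: (HS x Sx) => [Px|Qx]; first exact: H1.
  by exfalso; apply: nQ; exists x.
- exists m2; split=> // x Sx; case: (HS x Sx) => [Px|Qx]; last exact: H2.
  by exfalso; apply: nP; exists x.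
- by exfalso; case: (HS x0 Sx0) => [Px|Qx]; [apply: nP|apply: nQ]; exists x0.
Qed.

Lemma min_uniq (P : Gam -> Prop) m m' : is_min P m -> is_min P m' -> m = m'.
Proof.
case=> Pm Hm [Pm' Hm']; apply/eqP; rewrite eq_le; apply/andP; split;
[exact: Hm|exact: Hm'].
Qed.

Lemma min_or_zero (x : hprod B) : hahn_set x ->
  x = hzero B \/ exists m, is_min (hsupp x) m.
Proof.
move=> Hx; case: (classic (exists g, hsupp x g)) => [ne|nex].
  by right; apply: Hx ne.
left; apply: functional_extensionality_dep => g; rewrite /hzero.
case: (eqVneq (x g) 0) => // ne; exfalso; apply: nex; exists g; exact/eqP.
Qed.

Lemma nomin_zero : ~ exists m, is_min (hsupp (hzero B)) m.
Proof. by case=> m [H _]; apply: H. Qed.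

Lemma hahn_subgroup :
  subgroup_closed (hzero B) (@hadd _ _ B) (@hopp _ _ B) (@hahn_set _ _ B).
Proof.
split; [|split].
- move=> S HS [x Sx]; by case: (HS x Sx).
- move=> a b Ha Hb; apply: wo_sub (wo_union Ha Hb) _ => g.
  rewrite /hsupp /Defs.support /hadd; case: (eqVneq (a g) 0) => [->|]; last by left; apply/eqP.
  by rewrite add0r; right.
- move=> a Ha; apply: wo_sub Ha _ => g; rewrite /hsupp /Defs.support /hopp => H E.
  by apply: H; rewrite E oppr0.
Qed.
End Gen.

Section Val.
Context {dG : Order.disp_t} {Gam : orderType dG} (B : Gam -> zmodType)
  (R : forall g, B g -> B g -> Prop)
  (dD : Gam -> Order.disp_t) (D : forall g, orderType (dD g))
  (vv : forall g, B g -> option (D g))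
  (Hv0 : forall g a, vv g a = None <-> a = 0)
  (Hvu : forall g a b, vle (vv g a) (vv g (a + b)) \/ vle (vv g b) (vv g (a + b)))
  (Hvo : forall g a, vv g (- a) = vv g a)
  (HvR : forall g a b, R g a b <-> vle (vv g b) (vv g a)).

Definition wv (x : hprod B) : option (lexT D) :=
  match excluded_middle_informative (exists m, is_min (hsupp x) m) with
  | left H => let m := proj1_sig (constructive_indefinite_description _ H) in
      omap (fun d => Tagged (fun g => D g) d) (@vv m (x m))
  | right _ => None
  end.

Lemma wE x m : is_min (hsupp x) m ->
  wv x = omap (fun d => Tagged (fun g => D g) d) (@vv m (x m)).
Proof.
move=> Hm; rewrite /wv; case: excluded_middle_informative => [H|H]; last first.
  by exfalso; apply: H; exists m.
case: (constructive_indefinite_description _ H) => m' Hm' /=.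
have E : m' = m by apply: min_uniq Hm' Hm.
by subst m'.
Qed.

Lemma wN x : ~ (exists m, is_min (hsupp x) m) -> wv x = None.
Proof. by move=> H; rewrite /wv; case: excluded_middle_informative. Qed.

Lemma wSome x m : is_min (hsupp x) m ->
  exists val, wv x = Some (Tagged (fun g => D g) val) /\ @vv m (x m) = Some val.
Proof.
move=> Hm; rewrite (wE Hm); case E: (@vv m (x m)) => [val|]; first by exists val.
by exfalso; case: Hm => Hm _; apply: Hm; apply/Hv0.
Qed.

Lemma vvS g a : a <> 0 -> exists val, @vv g a = Some val.
Proof. by move=> H; case E: (@vv g a) => [val|]; [exists val|exfalso; apply/H/Hv0]. Qed.

Lemma helper c m (val : D m) : hahn_set c -> vle (@vv m (c m)) (Some val) ->
  vle (wv c) (Some (Tagged (fun g => D g) val)).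
Proof.
move=> Hc H.
have cm : c m <> 0 by move=> E; move: H; rewrite E (proj2 (@Hv0 m 0) erefl).
case: (min_or_zero Hc) => [E|[mc Hmc]]; first by exfalso; apply: cm; rewrite E.
have le : (mc <= m)%O by case: Hmc => _; apply; exact: cm.
have [vc [-> Evc]] := wSome Hmc.
rewrite /= lexleE /lexle /=.
case: (ltgtP mc m) le => //= E _.
subst mc; rewrite tagged_asE; rewrite Evc in H; exact: H.
Qed.

Lemma hahn_val : valuational_on (hzero B) (@hadd _ _ B) (@hopp _ _ B)
  (@hahn_set _ _ B) (hahn_le R).
Proof.
exists dG, (lexT D), wv.
split; [|split; [|split]].
- move=> a Ha; split=> [E|->]; last first.
    rewrite wN //; exact: nomin_zero.
  case: (min_or_zero Ha) => [//|[m Hm]].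
  by have [val [E' _]] := wSome Hm; rewrite E' in E.
- move=> a b Ha Hb.
  have Hab : hahn_set (hadd a b) by have [_ [H _]] := hahn_subgroup B; apply: H.
  case: (min_or_zero Hab) => [E|[m Hm]]; first by rewrite E (wN (@nomin_zero _ _ B)); left.
  have [val [-> Ev]] := wSome Hm.
  rewrite /hadd /= in Ev.
  by case: (Hvu (a m) (b m)); rewrite Ev => H; [left|right]; apply: helper H.
- move=> a Ha.
  have Hs : forall g, hsupp (hopp a) g <-> hsupp a g.
    move=> g; rewrite /hsupp /Defs.support /hopp.
    split=> H E; apply: H; first by rewrite E oppr0.
    by apply/eqP; rewrite -oppr_eq0; apply/eqP.
  case: (classic (exists m, is_min (hsupp a) m)) => [[m Hm]|N].
    have Hm' : is_min (hsupp (hopp a)) m.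
      by case: Hm => H1 H2; split; [apply/Hs|move=> x /Hs; apply: H2].
    by rewrite (wE Hm) (wE Hm') /hopp /= Hvo.
  rewrite (wN N) wN //; case=> m [Hm1 Hm2]; apply: N; exists m; split.
    exact/Hs.
  by move=> x Hx; apply: Hm2; apply/Hs.
- move=> a b Ha Hb.
  case: (classic (a = hzero B /\ b = hzero B)) => [[-> ->]|nz].
    by rewrite (wN (@nomin_zero _ _ B)); split=> // _; left.
  set U := fun g => hsupp a g \/ hsupp b g.
  have [d Hd] : exists d, is_min U d.
    apply: (wo_union Ha Hb) => //.
    case: (min_or_zero Ha) => [Ea|[m [Hm _]]]; last by exists m; left.
    case: (min_or_zero Hb) => [Eb|[m [Hm _]]]; last by exists m; right.
    by exfalso; apply: nz.
  have Hle : hahn_le R a b <-> R (a d) (b d).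
    split.
      case=> [//|[d' [Hd' Hr]]]; have E := min_uniq Hd' Hd; subst d'; exact: Hr.
    by move=> Hr; right; exists d.
  apply: iff_trans Hle _; apply: iff_trans (HvR _ _) _.
  have side : forall c, hahn_set c -> (forall g, hsupp c g -> U g) -> c d = 0 ->
      wv c = None \/ exists m (val : D m), (d < m)%O /\
        wv c = Some (Tagged (fun g => D g) val).
    move=> c Hc sub cd.
    case: (min_or_zero Hc) => [->|[m Hm]]; first by left; exact: (wN (@nomin_zero _ _ B)).
    right; have [val [E _]] := wSome Hm; exists m, val; split=> //.
    rewrite lt_neqAle; apply/andP; split.
      by apply/eqP => E'; subst m; case: Hm => H _; exact: H cd.
    exact: (proj2 Hd m (sub m (proj1 Hm))).
  have onmin : forall c : hprod B, (forall g, hsupp c g -> U g) -> c d <> 0 ->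
      is_min (hsupp c) d.
    move=> c0 s0 h0; split; first exact: h0.
    by move=> x Hx; exact: (proj2 Hd x (s0 x Hx)).
  have suba : forall g, hsupp a g -> U g by move=> g H; left.
  have subb : forall g, hsupp b g -> U g by move=> g H; right.
  case: (eqVneq (a d) 0) => ad; case: (eqVneq (b d) 0) => bd.
  + by exfalso; case: Hd => [[H|H] _]; [exact: H ad|exact: H bd].
  + rewrite ad (proj2 (@Hv0 d 0) erefl).
    have bd' : b d <> 0 by apply/eqP.
    have [vb [Eb _]] := wSome (onmin b subb bd').
    case: (side a Ha suba ad) => [->|[m [val [lt ->]]]]; first by [].
    by rewrite Eb /= lexleE /lexle /= lt.
  + rewrite bd (proj2 (@Hv0 d 0) erefl).
    have ad' : a d <> 0 by apply/eqP.
    have [va [Ea Eva]] := wSome (onmin a suba ad').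
    rewrite Eva Ea.
    case: (side b Hb subb bd) => [->|[m [val [lt ->]]]]; first by [].
    by rewrite /= lexleE /lexle /= lt_gtF // gt_eqF.
  + have ad' : a d <> 0 by apply/eqP.
    have bd' : b d <> 0 by apply/eqP.
    have [va [Ea Eva]] := wSome (onmin a suba ad').
    have [vb [Eb Evb]] := wSome (onmin b subb bd').
    by rewrite Eva Evb Ea Eb /= lexleE /lexle /= ltxx eqxx tagged_asE.
Qed.
End Val.

Theorem mainTheorem11 (dG : Order.disp_t) (Gam : orderType dG)
    (B : Gam -> zmodType) (R : forall g, B g -> B g -> Prop)
    (HR : forall g, valuational (R g)) :
  subgroup_closed (hzero B) (@hadd _ _ B) (@hopp _ _ B) (@hahn_set _ _ B) /\
  valuational_on (hzero B) (@hadd _ _ B) (@hopp _ _ B) (@hahn_set _ _ B)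
    (hahn_le R).
Proof.
split; first exact: hahn_subgroup.
have Hch : forall g, {d : Order.disp_t & {D : orderType d & {v : B g -> option D |
    (forall a, v a = None <-> a = 0) /\
    (forall a b, vle (v a) (v (a + b)) \/ vle (v b) (v (a + b))) /\
    (forall a, v (- a) = v a) /\
    (forall a b, R g a b <-> vle (v b) (v a))}}}.
  move=> g; case/constructive_indefinite_description: (HR g) => d.
  case/constructive_indefinite_description => D.
  case/constructive_indefinite_description => v [H1 [H2 [H3 H4]]].
  exists d, D, v; split; [|split; [|split]].
  - by move=> a; apply: H1.
  - by move=> a b; apply: H2.
  - by move=> a; apply: H3.
  - by move=> a b; apply: H4.
pose dD g := projT1 (Hch g).
pose D g : orderType (dD g) := projT1 (projT2 (Hch g)).
pose vv g : B g -> option (D g) := proj1_sig (projT2 (projT2 (Hch g))).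
have HP g := proj2_sig (projT2 (projT2 (Hch g))).
apply: (@hahn_val _ _ B R dD D vv).
- by move=> g; case: (HP g).
- by move=> g; case: (HP g) => _ [].
- by move=> g; case: (HP g) => _ [_ []].
- by move=> g; case: (HP g) => _ [_ [_]].
Qed.
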